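(* Let $n,m\ge1$, $r>0$, and let $\mathbf b_1,\dots,\mathbf b_m\in[0,\infty)^n$ be nonzero vectors. Put $D_{ij}=\frac{r}{m}(\mathbf b_i\cdot\mathbf b_j)$ and $\overline D=\max_{i,j}D_{ij}$. Define $\alpha^{(t)}\in\mathbb{R}^m$, $t\ge0$, by $\alpha^{(0)}_k=\sqrt{1/(\overline D m)}$ for all $k$, and, given $\alpha^{(t)}$: let $E_i^{(t)}=\sum_{j=1}^m D_{ij}\alpha^{(t)}_i\alpha^{(t)}_j-1$, choose $k=k_t$ with $|E^{(t)}_k|=\max_i|E^{(t)}_i|$, set $\alpha^{(t+1)}_i=\alpha^{(t)}_i$ for $i\neq k$ and $\alpha^{(t+1)}_k=\frac{-s+\sqrt{s^2+4D_{kk}}}{2D_{kk}}$ with $s=\sum_{i\ne k}D_{ik}\alpha^{(t)}_i$. Let $E^{(t)}=\sum_{i=1}^m|E^{(t)}_i|$. Then the sequence $(E^{(t)})_{t\ge0}$ is decreasing: $E^{(t+1)}\le E^{(t)}$ for all $t\ge0$. *)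

(* Defs.v *)
From HB Require Import structures.
From mathcomp Require Import all_boot all_order all_algebra.
From mathcomp Require Import reals.
Set Implicit Arguments. Unset Strict Implicit. Unset Printing Implicit Defensive.
Import Order.TTheory GRing.Theory Num.Theory.
Local Open Scope ring_scope.

Section Defs.
Variables (R : realType) (n m : nat).

Definition Dmat (r : R) (b : 'I_m -> 'rV[R]_n) (i j : 'I_m) : R :=
  r / m%:R * (\sum_(l < n) b i 0 l * b j 0 l).

(* Dbar = max_{i,j} D_{ij}; folded with neutral element 0, which is harmless
   since all D_{ij} >= 0 (nonnegative vectors) and m >= 1. *)
Definition Dbar (D : 'I_m -> 'I_m -> R) : R :=
  \big[Num.max/0]_(i < m) \big[Num.max/0]_(j < m) D i j.

Definition alpha0 (D : 'I_m -> 'I_m -> R) : 'I_m -> R :=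
  fun _ => Num.sqrt (1 / (Dbar D * m%:R)).

Definition Eerr (D : 'I_m -> 'I_m -> R) (a : 'I_m -> R) (i : 'I_m) : R :=
  \sum_(j < m) D i j * a i * a j - 1.

Definition Etot (D : 'I_m -> 'I_m -> R) (a : 'I_m -> R) : R :=
  \sum_(i < m) `|Eerr D a i|.

Definition update (D : 'I_m -> 'I_m -> R) (a : 'I_m -> R) (k : 'I_m) : 'I_m -> R :=
  let s := \sum_(i < m | i != k) D i k * a i in
  fun i => if i == k then (- s + Num.sqrt (s ^+ 2 + 4 * D k k)) / (2 * D k k)
           else a i.

(* the iterates, given the sequence of chosen indices ks t = k_t *)
Fixpoint alpha (D : 'I_m -> 'I_m -> R) (ks : nat -> 'I_m) (t : nat) : 'I_m -> R :=
  match t with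
  | 0 => alpha0 D
  | t'.+1 => update D (alpha D ks t') (ks t')
  end.

End Defs.

(* Main.v *)
Require Import Defs.
From HB Require Import structures.
From mathcomp Require Import all_boot all_order all_algebra.
From mathcomp Require Import reals.
From mathcomp Require Import ring lra.
Import Order.TTheory GRing.Theory Num.Theory.
Local Open Scope ring_scope.

Section S.
Variables (R : realType) (m : nat) (D : 'I_m -> 'I_m -> R).
Hypothesis Dsym : forall i j, D i j = D j i.
Hypothesis Dge0 : forall i j, 0 <= D i j.

Lemma update_ge0 a k : 0 < D k k -> (forall i, 0 <= a i) ->
  forall i, 0 <= update D a k i.
Proof.
move=> Dk a0 i; rewrite /update /=; case: eqP => // _.
set s := \sum_(i < m | i != k) D i k * a i.
set q := Num.sqrt _.
have q0 : 0 <= q by apply: sqrtr_ge0.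
have qq : q ^+ 2 = s ^+ 2 + 4 * D k k.
  by rewrite sqr_sqrtr // addr_ge0 ?sqr_ge0 // mulr_ge0 // ltW.
apply: divr_ge0; last by rewrite mulr_ge0 // ltW.
have : s <= q by nra.
lra.
Qed.

Lemma key a k : 0 < D k k -> (forall i, 0 <= a i) ->
  Etot D (update D a k) <= Etot D a.
Proof.
move=> Dk a0.
have xge0 : 0 <= update D a k k by apply: update_ge0.
set s := \sum_(i < m | i != k) D i k * a i.
set q := Num.sqrt (s ^+ 2 + 4 * D k k).
set x := (- s + q) / (2 * D k k).
have ux : update D a k k = x by rewrite /update /= eqxx.
have ui : forall i, i != k -> update D a k i = a i.
  by move=> i /negbTE ik; rewrite /update /= ik.
rewrite ux in xge0.
have qq : q ^+ 2 = s ^+ 2 + 4 * D k k.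
  by rewrite sqr_sqrtr // addr_ge0 ?sqr_ge0 // mulr_ge0 // ltW.
have Dk0 : D k k != 0 by rewrite gt_eqF.
have fx : D k k * x ^+ 2 + s * x = 1.
  have -> : D k k * x ^+ 2 + s * x = (q ^+ 2 - s ^+ 2) / (4 * D k k).
    by rewrite /x; field.
  by rewrite qq addrAC subrr add0r divff // mulf_neq0 // pnatr_eq0.
have s0 : 0 <= s by apply: sumr_ge0 => i _; rewrite mulr_ge0.
have ES : forall a' i, Eerr D a' i =
    D i k * a' i * a' k + \sum_(j < m | j != k) D i j * a' i * a' j - 1.
  by move=> a' i; rewrite /Eerr (bigD1 k).
have Ek_new : Eerr D (update D a k) k = 0.
  rewrite ES ux (eq_bigr (fun j => x * (D j k * a j))); last first.
    by move=> j jk; rewrite ui // Dsym; ring.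
  rewrite -mulr_sumr -/s -fx; ring.
have Ei_new : forall i, i != k ->
    Eerr D (update D a k) i = Eerr D a i + D i k * a i * (x - a k).
  move=> i ik; rewrite !ES ux (ui i ik).
  rewrite (eq_bigr (fun j => D i j * a i * a j)); last by move=> j jk; rewrite !ui.
  ring.
have Ek_old : Eerr D a k = (a k - x) * (D k k * (a k + x) + s).
  rewrite ES (eq_bigr (fun j => a k * (D j k * a j))); last first.
    by move=> j jk; rewrite Dsym; ring.
  rewrite -mulr_sumr -/s.
  have -> : (a k - x) * (D k k * (a k + x) + s) =
     D k k * a k * a k + a k * s - (D k k * x ^+ 2 + s * x) by ring.
  by rewrite fx.
rewrite /Etot (bigD1 k) //= [X in _ <= X](bigD1 k) //= Ek_new normr0 add0r.
apply: le_trans (_ : \sum_(i < m | i != k) (`|Eerr D a i| + D i k * a i * `|x - a k|) <= _).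
  apply: ler_sum => i ik; rewrite Ei_new //.
  apply: le_trans (ler_normD _ _) _.
  by rewrite normrM (ger0_norm (mulr_ge0 (Dge0 _ _) (a0 _))).
rewrite big_split /= addrC lerD2r -mulr_suml -/s Ek_old normrM distrC.
rewrite [X in _ <= _ * X]ger0_norm; last by rewrite addr_ge0 // mulr_ge0 // addr_ge0.
rewrite mulrC ler_wpM2l // lerDr mulr_ge0 // ?addr_ge0 // ltW.
Qed.

End S.

Theorem lemma3 (R : realType) (n m : nat) (r : R) (b : 'I_m -> 'rV[R]_n)
    (ks : nat -> 'I_m) :
  (0 < n)%N -> (0 < m)%N -> 0 < r ->
  (forall i l, 0 <= b i 0 l) ->
  (forall i, b i != 0) ->
  (forall t i, `|Eerr (Dmat r b) (alpha (Dmat r b) ks t) i|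
               <= `|Eerr (Dmat r b) (alpha (Dmat r b) ks t) (ks t)|) ->
  forall t : nat,
    Etot (Dmat r b) (alpha (Dmat r b) ks t.+1)
      <= Etot (Dmat r b) (alpha (Dmat r b) ks t).
Proof.
move=> n0 m0 r0 bge0 bnz _ t.
have Dsym : forall i j, Dmat r b i j = Dmat r b j i.
  by move=> i j; rewrite /Dmat; congr (_ * _); apply: eq_bigr => l _; rewrite mulrC.
have rm0 : 0 < r / m%:R by rewrite divr_gt0 // ltr0n.
have Dge0 : forall i j, 0 <= Dmat r b i j.
  move=> i j; rewrite /Dmat; apply: mulr_ge0; [exact: ltW | apply: sumr_ge0 => l _; exact: mulr_ge0].
have Dkk : forall k, 0 < Dmat r b k k.
  move=> k.
  have : ~~ [forall l, b k 0 l == 0].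
    apply: contra (bnz k) => /forallP H; apply/eqP/rowP => j.
    by rewrite mxE; exact/eqP/H.
  rewrite negb_forall => /existsP [l hl].
  rewrite /Dmat mulr_gt0 // (bigD1 l) //=.
  have p : 0 < b k 0 l by rewrite lt_def hl bge0.
  have p2 : 0 < b k 0 l * b k 0 l by rewrite mulr_gt0.
  have s0 : 0 <= \sum_(i < n | i != l) b k 0 i * b k 0 i.
    by apply: sumr_ge0 => i _; rewrite mulr_ge0.
  lra.
have ag0 : forall t i, 0 <= alpha (Dmat r b) ks t i.
  elim=> [|t' IH] i /=; first by rewrite /alpha0 sqrtr_ge0.
  by apply: update_ge0.
exact: key.
Qed.
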